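(* There exists a convenient subspecies $\mathrm{Bool}_{\max}$ of $\mathrm{Bool}$ which is maximal for inclusion: for every convenient subspecies $\mathrm{Bool}_t$ and every finite set $X$, $\mathrm{Bool}_t(X)\subseteq\mathrm{Bool}_{\max}(X)$.
   Context: A boolean function on a finite set $X$ is a map $f:\mathcal{P}(X)\to\mathbb{Z}$ with $f(\emptyset)=0$; $\mathrm{Bool}(X)$ is their set; $f_{\mid Y}$ is the restriction to $\mathcal{P}(Y)$. For disjoint $X,Y$, $(f\star_1g)(A)=f(A\cap X)+g(A\cap Y)$ (associative, commutative, unit $1\in\mathrm{Bool}(\emptyset)$). For nonempty $X$, $f$ is indecomposable if $f=f'\star_1f''$ with $f'\in\mathrm{Bool}(X\setminus Y)$, $f''\in\mathrm{Bool}(Y)$ forces $Y\in\{\emptyset,X\}$. Each $f$ determines a unique equivalence $\sim_f^i$ with $f=\prod^{\star_1}_{Y\in X/\sim_f^i}f_{\mid Y}$ and each $f_{\mid Y}$ indecomposable; $\mathrm{ic}(f)=|X/\sim_f^i|$. For an equivalence $\sim$ on $X$: $\mathrm{cl}(\sim)=|X/{\sim}|$, $\varpi_\sim$ the canonical surjection, $f/{\sim}(A)=f(\varpi_\sim^{-1}(A))$, $(f\mid\sim)(A)=\sum_{Y\in X/\sim}f(A\cap Y)$. $\mathcal{E}^W(f)=\{\sim:\mathrm{ic}(f\mid\sim)=\mathrm{cl}(\sim)\}$ and $\mathcal{E}^S(f)=\{\sim\in\mathcal{E}^W(f):\mathrm{ic}(f/{\sim})=\mathrm{ic}(f)\}$.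 A convenient subspecies is an assignment $X\mapsto\mathrm{Bool}_t(X)\subseteq\mathrm{Bool}(X)$, stable under bijections ($f\mapsto f\circ\sigma^{-1}$), such that: $1\in\mathrm{Bool}_t(\emptyset)$; $f\star_1g\in\mathrm{Bool}_t(X\sqcup Y)$ for $f\in\mathrm{Bool}_t(X)$, $g\in\mathrm{Bool}_t(Y)$; $f_{\mid Y}\in\mathrm{Bool}_t(Y)$ for $f\in\mathrm{Bool}_t(X)$, $Y\subseteq X$; $f/{\sim}\in\mathrm{Bool}_t(X/{\sim})$ for $f\in\mathrm{Bool}_t(X)$, $\sim\in\mathcal{E}^W(f)$; and $\mathcal{E}^W(f)=\mathcal{E}^S(f)$ for all $f\in\mathrm{Bool}_t(X)$. *)

(* Defs.v *)
From HB Require Import structures.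
From mathcomp Require Import all_boot all_order all_algebra.
Set Implicit Arguments. Unset Strict Implicit. Unset Printing Implicit Defensive.
Import GRing.Theory Num.Theory.
Local Open Scope ring_scope.

(* Functions P(X) -> Z on a finite set X (a finType).  Membership in Bool(X)
   additionally requires f set0 = 0. *)
Definition boolfun (X : finType) := {set X} -> int.

(* f_{|Y} is indecomposable, where subsets of Y are viewed as subsets of X
   contained in Y.  A decomposition f_{|Y} = f' *_1 f'' with
   f' in Bool(Y\Z), f'' in Bool(Z) forces f' = f_{|Y\Z}, f'' = f_{|Z}. *)
Definition indecomposable_on (X : finType) (f : boolfun X) (Y : {set X}) : bool :=
  (Y != set0) &&
  [forall Z : {set X}, (Z \subset Y) ==>
     [forall A : {set X}, (A \subset Y) ==>
        (f A == f (A :&: (Y :\: Z)) + f (A :&: Z))] ==>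
     ((Z == set0) || (Z == Y))].

(* P is the (unique) partition of X into classes of ~_f^i:
   f = prod^{*_1}_{Y in P} f_{|Y} with every f_{|Y} indecomposable. *)
Definition is_idecomp (X : finType) (f : boolfun X) (P : {set {set X}}) : bool :=
  [&& partition P [set: X],
      [forall A : {set X}, f A == \sum_(Y in P) f (A :&: Y)] &
      [forall Y in P, indecomposable_on f Y]].

(* ic(f) = |X / ~_f^i|  (the decomposition exists and is unique) *)
Definition ic (X : finType) (f : boolfun X) : nat :=
  if [pick P | is_idecomp f P] is Some P then #|P| else 0%N.

(* An equivalence ~ on X is a boolean relation e with equivalence_rel e;
   X/~ is the set of its classes. *)
Definition classes (X : finType) (e : rel X) : {set {set X}} :=
  equivalence_partition e [set: X].

Definition cl (X : finType) (e : rel X) : nat := #|classes e|.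

Definition quot (X : finType) (e : rel X) : finType :=
  {C : {set X} | C \in classes e}.

(* f/~ (A) = f(varpi^{-1}(A)), and varpi^{-1}(A) is the union of the classes in A *)
Definition quot_fun (X : finType) (f : boolfun X) (e : rel X) : boolfun (quot e) :=
  fun A => f (\bigcup_(C in A) val C).
Arguments quot_fun {X} f e _.

Definition restr_fun (X : finType) (f : boolfun X) (e : rel X) : boolfun X :=
  fun A => \sum_(Y in classes e) f (A :&: Y).

Definition EW (X : finType) (f : boolfun X) (e : rel X) : Prop :=
  equivalence_rel e /\ ic (restr_fun f e) = cl e.

Definition ES (X : finType) (f : boolfun X) (e : rel X) : Prop :=
  EW f e /\ ic (quot_fun f e) = ic f.

Definition subspecies := forall X : finType, boolfun X -> Prop.

Definition convenient (Bt : subspecies) : Prop :=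
  [/\ (* Bool_t(X) is a subset of Bool(X) *)
      (forall (X : finType) (f : boolfun X), Bt X f -> f set0 = 0),
      (forall (X Y : finType) (s : X -> Y), bijective s ->
         forall f : boolfun X, Bt X f -> Bt Y (fun B => f (s @^-1: B))),
      (* 1 in Bool_t(emptyset) *)
      Bt void (fun _ => 0),
      (* closed under *_1 on disjoint unions *)
      (forall (X Y : finType) (f : boolfun X) (g : boolfun Y),
         Bt X f -> Bt Y g ->
         Bt (X + Y)%type (fun A => f (inl @^-1: A) + g (inr @^-1: A))) &
      [/\
         (forall (X : finType) (f : boolfun X) (Y : {set X}),
            Bt X f -> Bt {y : X | y \in Y} (fun B => f (val @: B))),
         (forall (X : finType) (f : boolfun X) (e : rel X),
            Bt X f -> EW f e -> Bt (quot e) (quot_fun f e)) &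
         (forall (X : finType) (f : boolfun X) (e : rel X),
            Bt X f -> (EW f e <-> ES f e))]].

(* Main.v *)
Require Import Defs.
From mathcomp Require Import all_boot all_order all_algebra.
From mathcomp Require Import zify.
Set Implicit Arguments. Unset Strict Implicit. Unset Printing Implicit Defensive.
Import GRing.Theory Num.Theory.
Local Open Scope ring_scope.

Section SetFacts.
Variables (aT rT : finType) (g : aT -> rT).
Hypothesis ginj : injective g.

Lemma imset_mem_inj (A : {set aT}) x : (g x \in g @: A) = (x \in A).
Proof. by apply/imsetP/idP => [[y yA /ginj ->]|xA]; [|exists x]. Qed.

Lemma imsetI_inj (A B : {set aT}) : g @: (A :&: B) = g @: A :&: g @: B.
Proof.
apply/setP => z; apply/imsetP/setIP => [[x /setIP [xA xB] ->]|[/imsetP[x xA ->] /imsetP[y yB /ginj eq]]].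
  by split; apply: imset_f.
by exists x => //; rewrite inE xA eq yB.
Qed.

Lemma imsetD_inj (A B : {set aT}) : g @: (A :\: B) = g @: A :\: g @: B.
Proof.
apply/setP => z; rewrite inE; apply/imsetP/andP => [[x /setDP [xA xB] ->]|[zB /imsetP[x xA zE]]].
  by split; [rewrite imset_mem_inj | apply: imset_f].
by exists x => //; rewrite inE xA andbT -(imset_mem_inj B) -zE.
Qed.


Lemma preim_imset (A : {set aT}) : g @^-1: (g @: A) = A.
Proof. by apply/setP => x; rewrite inE imset_mem_inj. Qed.

Lemma imset_preim (A : {set rT}) : A \subset g @: setT -> g @: (g @^-1: A) = A.
Proof.
move=> /subsetP sA; apply/setP => z; apply/imsetP/idP => [[x]|zA].
  by rewrite inE => xA ->.
have /imsetP[x _ zE] := sA z zA; by exists x; rewrite // inE -zE.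
Qed.

Lemma imsetI_preim (A : {set aT}) (U : {set rT}) : g @: (A :&: g @^-1: U) = g @: A :&: U.
Proof.
apply/setP => z; apply/imsetP/setIP => [[x /setIP [xA] /[!inE] xU ->]|[/imsetP[x xA ->] xU]].
  by split => //; apply: imset_f.
by exists x => //; rewrite !inE xA.
Qed.
End SetFacts.

Section Core.
Variable X : finType.
Implicit Types (f g : boolfun X) (U Y Z A : {set X}) (P Q : {set {set X}}).

Definition splits f Y Z := forall A, A \subset Y -> f A = f (A :&: (Y :\: Z)) + f (A :&: Z).

Lemma indecP f Y : reflect (Y != set0 /\ forall Z, Z \subset Y -> splits f Y Z -> Z = set0 \/ Z = Y)
  (indecomposable_on f Y).
Proof.
rewrite /indecomposable_on; apply: (iffP andP) => [[nY /forallP H]|[nY H]]; split => //.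
  move=> Z sZ spl; have := H Z; rewrite sZ /=.
  have -> : [forall A : {set X}, (A \subset Y) ==> (f A == f (A :&: (Y :\: Z)) + f (A :&: Z))].
    by apply/forallP => A; apply/implyP => sA; apply/eqP; exact: spl.
  by move=> /orP[/eqP|/eqP]; [left|right].
apply/forallP => Z; apply/implyP => sZ; apply/implyP => /forallP HA.
have spl : splits f Y Z by move=> A sA; have /implyP/(_ sA)/eqP := HA A.
by case: (H Z sZ spl) => ->; rewrite eqxx ?orbT.
Qed.

Lemma indec_witness f Y : Y != set0 -> ~~ indecomposable_on f Y ->
  exists Z, [/\ Z \subset Y, splits f Y Z, Z != set0 & Z != Y].
Proof.
move=> nY; rewrite /indecomposable_on nY /= => /forallPn [Z].
rewrite !negb_imply negb_or => /and3P [sZ /forallP HA /andP [nZ nZY]].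
exists Z; split => // A sA.
by have /implyP/(_ sA)/eqP := HA A.
Qed.

Definition idecomp f U P := [&& partition P U,
  [forall A : {set X}, (A \subset U) ==> (f A == \sum_(Y in P) f (A :&: Y))] &
  [forall Y in P, indecomposable_on f Y]].

Lemma idecompP f U P : reflect [/\ partition P U,
   forall A, A \subset U -> f A = \sum_(Y in P) f (A :&: Y) &
   forall Y, Y \in P -> indecomposable_on f Y] (idecomp f U P).
Proof.
apply: (iffP and3P) => [[pP /forallP hA /forallP hY]|[pP hA hY]]; split => //.
- by move=> A sA; apply/eqP; have /implyP := hA A; apply.
- by move=> Y YP; have /implyP := hY Y; apply.
- by apply/forallP => A; apply/implyP => sA; apply/eqP; apply: hA.
- by apply/forallP => Y; apply/implyP; apply: hY.
Qed.

Definition ic_on f U := if [pick P | idecomp f U P] is Some P then #|P| else 0%N.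

Lemma indec_congr f g Y : (forall A, A \subset Y -> f A = g A) ->
  indecomposable_on f Y = indecomposable_on g Y.
Proof.
move=> H; rewrite /indecomposable_on; congr (_ && _); apply: eq_forallb => Z.
congr (_ ==> (_ ==> _)); apply: eq_forallb => A.
case sA: (A \subset Y) => //=.
rewrite !H // ?(subset_trans (subsetIl _ _) sA) //.
Qed.

Section WithF.
Variable f : boolfun X.
Hypothesis f0 : f set0 = 0.

Lemma block_sub U Q Y : partition Q U ->
  (forall A, A \subset U -> f A = \sum_(C in Q) f (A :&: C)) ->
  indecomposable_on f Y -> Y \subset U -> exists2 C, C \in Q & Y \subset C.
Proof.
move=> pQ hQ /indecP [nY iY] sYU.
have [y yY] := set0Pn _ nY.
have yU : y \in cover Q by rewrite (cover_partition pQ) (subsetP sYU).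
set C := pblock Q y.
have CQ : C \in Q := pblock_mem yU.
have yC : y \in C by rewrite mem_pblock.
exists C => //.
have tQ := partition_trivIset pQ.
have spl : splits f Y (Y :&: C).
  move=> A sA.
  have sAU : A \subset U := subset_trans sA sYU.
  have -> : A :&: (Y :&: C) = A :&: C by rewrite setIA (setIidPl sA).
  have -> : A :&: (Y :\: (Y :&: C)) = A :\: C.
    apply/setP => x; rewrite !inE; case xA: (x \in A); rewrite ?andbF //=.
    by rewrite (subsetP sA x xA) /= andbT.
  have sADU : A :\: C \subset U := subset_trans (subsetDl _ _) sAU.
  rewrite [f A]hQ // [f (A :\: C)]hQ // (bigD1 C CQ) /= [X in _ = X + _](bigD1 C CQ) /=.
  have -> : (A :\: C) :&: C = set0.
    by apply/setP=> x; rewrite !inE; case: (x \in C); rewrite ?andbF.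
  rewrite f0 add0r addrC; congr (_ + _); apply: eq_bigr => C' /andP [C'Q neq].
  have dis : [disjoint C' & C] := trivIsetP tQ _ _ C'Q CQ neq.
  congr (f _); apply/setP => x; rewrite !inE.
  case xC': (x \in C'); rewrite ?andbF ?andbT //=.
  by rewrite (disjointFr dis xC').
have [E|E] := iY _ (subsetIl _ _) spl.
  by move: E => /setP/(_ y); rewrite !inE yY yC.
by apply/setIidPl.
Qed.

Lemma sub_block_eq P Y Y' : trivIset P -> Y \in P -> Y' \in P -> Y != set0 ->
  Y \subset Y' -> Y = Y'.
Proof.
move=> tP YP Y'P nY sY; apply/eqP; apply: contraT => neq.
have := trivIsetP tP _ _ YP Y'P neq.
by rewrite -setI_eq0 (setIidPl sY) (negbTE nY).
Qed.

Lemma idecomp_sub U P Q : idecomp f U P -> idecomp f U Q -> P \subset Q.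
Proof.
move=> /idecompP [pP hP iP] /idecompP [pQ hQ iQ]; apply/subsetP => Y YP.
have sYU := partitionS pP YP.
have [C CQ sYC] := block_sub pQ hQ (iP _ YP) sYU.
have [Y' Y'P sCY'] := block_sub pP hP (iQ _ CQ) (partitionS pQ CQ).
have nY := partition_neq0 pP YP.
have eYY' := sub_block_eq (partition_trivIset pP) YP Y'P nY (subset_trans sYC sCY').
have eYC : Y = C by apply/eqP; rewrite eqEsubset sYC eYY'.
by rewrite eYC.
Qed.

Lemma idecomp_uniq U P Q : idecomp f U P -> idecomp f U Q -> P = Q.
Proof.
by move=> hP hQ; apply/eqP; rewrite eqEsubset (idecomp_sub hP hQ) (idecomp_sub hQ hP).
Qed.

Lemma ic_onE U P : idecomp f U P -> ic_on f U = #|P|.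
Proof.
move=> hP; rewrite /ic_on; case: pickP => [Q hQ|/(_ P)].
  by rewrite (idecomp_uniq hQ hP).
by rewrite hP.
Qed.

Lemma idecompU U1 U2 P1 P2 : [disjoint U1 & U2] ->
  (forall A, A \subset U1 :|: U2 -> f A = f (A :&: U1) + f (A :&: U2)) ->
  idecomp f U1 P1 -> idecomp f U2 P2 ->
  idecomp f (U1 :|: U2) (P1 :|: P2) /\ #|P1 :|: P2| = (#|P1| + #|P2|)%N.
Proof.
move=> dU spl /idecompP [pP1 hP1 iP1] /idecompP [pP2 hP2 iP2].
have dP : P1 :&: P2 = set0.
  apply/setP => Y; rewrite !inE; apply/negbTE/negP => /andP [Y1 Y2].
  have := partition_neq0 pP1 Y1; have s1 := partitionS pP1 Y1.
  have s2 := partitionS pP2 Y2.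
  move: dU; rewrite -setI_eq0 => /eqP d.
  have : Y \subset U1 :&: U2 by rewrite subsetI s1 s2.
  by rewrite d subset0 => ->.
split; last by rewrite cardsU dP cards0 subn0.
apply/idecompP; split.
- apply/and3P; split.
  + by rewrite /cover bigcup_setU -!/(cover _) (cover_partition pP1) (cover_partition pP2).
  + apply: trivIsetU; [exact: partition_trivIset pP1 | exact: partition_trivIset pP2 |].
    by rewrite (cover_partition pP1) (cover_partition pP2).
  + by rewrite inE (partition0 pP1) (partition0 pP2).
- move=> A sA; rewrite spl // (big_setID P1).
  have -> : (P1 :|: P2) :&: P1 = P1 by rewrite setUK.
  have -> : (P1 :|: P2) :\: P1 = P2.
    by rewrite setDUl setDv set0U; apply/setDidPl; rewrite -setI_eq0 setIC dP.
  rewrite hP1 ?subsetIr // hP2 ?subsetIr //; congr (_ + _); apply: eq_bigr => Y YP.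
    by rewrite -setIA (setIidPr (partitionS pP1 YP)).
  by rewrite -setIA (setIidPr (partitionS pP2 YP)).
- by move=> Y; rewrite inE => /orP[]; [apply: iP1 | apply: iP2].
Qed.

Lemma idecomp_set0 : idecomp f set0 set0.
Proof.
apply/idecompP; split.
- by rewrite partition_set0.
- by move=> A; rewrite subset0 => /eqP ->; rewrite big_set0.
- by move=> Y; rewrite inE.
Qed.

Lemma idecomp_set1 U : indecomposable_on f U -> idecomp f U [set U].
Proof.
move=> iU; have nU : U != set0 by case/andP: iU.
apply/idecompP; split.
- apply/and3P; split; first by rewrite cover1.
    exact: trivIset1.
  by rewrite inE eq_sym.
- by move=> A sA; rewrite big_set1 (setIidPl sA).
- by move=> Y; rewrite inE => /eqP ->.
Qed.

Lemma idecomp_exists U : exists P, idecomp f U P.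
Proof.
move: {2}#|U| (leqnn #|U|) => n; elim: n U => [|n IH] U hU.
  have -> : U = set0 by apply/eqP; rewrite -cards_eq0 -leqn0.
  by exists set0; exact: idecomp_set0.
have [->|nU] := eqVneq U set0; first by exists set0; exact: idecomp_set0.
case iU: (indecomposable_on f U); first by exists [set U]; exact: idecomp_set1.
have [Z [sZ spl nZ nZU]] := indec_witness nU (negbT iU).
have cZ : (#|Z| < #|U|)%N by apply: proper_card; rewrite properEneq nZU sZ.
have cZ0 : (0 < #|Z|)%N by rewrite card_gt0.
have [P1 h1] := IH (U :\: Z) ltac:(rewrite cardsDS //; lia).
have [P2 h2] := IH Z ltac:(lia).
have eU : (U :\: Z) :|: Z = U.
  by apply/setP => x; rewrite !inE; case xZ: (x \in Z); rewrite ?orbF ?orbT //= (subsetP sZ x xZ).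
have dU : [disjoint U :\: Z & Z].
  by rewrite -setI_eq0; apply/eqP/setP => x; rewrite !inE; case: (x \in Z); rewrite ?andbF.
have spl' : forall A, A \subset (U :\: Z) :|: Z -> f A = f (A :&: (U :\: Z)) + f (A :&: Z).
  move=> A; rewrite eU => sA; rewrite spl //.
have [h _] := idecompU dU spl' h1 h2.
by exists (P1 :|: P2); rewrite -eU.
Qed.

End WithF.
End Core.

Lemma ic_eq (X : finType) (f : boolfun X) : ic f = ic_on f setT.
Proof.
rewrite /ic /ic_on.
have -> : [pick P | is_idecomp f P] = [pick P | idecomp f setT P].
  apply: eq_pick => P /=; rewrite /is_idecomp /idecomp; congr [&& _, _ & _].
  by apply: eq_forallb => A; rewrite subsetT.
by [].
Qed.

Lemma spl0 (X : finType) (h : boolfun X) S :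
  (forall A, h A = h (A :&: S) + h (A :&: ~: S)) -> h set0 = 0.
Proof. by move=> spl; have := spl set0; rewrite !set0I; lia. Qed.

Lemma ic_on_split (X : finType) (h : boolfun X) S :
  (forall A, h A = h (A :&: S) + h (A :&: ~: S)) ->
  ic_on h setT = (ic_on h S + ic_on h (~: S))%N.
Proof.
move=> spl; have h0 := spl0 spl.
have [P1 h1] := idecomp_exists h0 S; have [P2 h2] := idecomp_exists h0 (~: S).
have dU : [disjoint S & ~: S] by rewrite -setI_eq0 setICr.
have eU : S :|: ~: S = setT by rewrite setUCr.
have [h12 c] := idecompU dU (fun A _ => spl A) h1 h2.
by rewrite -eU (ic_onE h0 h12) (ic_onE h0 h1) (ic_onE h0 h2) c.
Qed.

Section EWsec.
Variables (X : finType) (f : boolfun X) (e : rel X).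
Hypothesis f0 : f set0 = 0.
Hypothesis eqe : equivalence_rel e.

Lemma classes_partition : partition (classes e) setT.
Proof. by apply: equivalence_partitionP => x y z _ _ _; apply: eqe. Qed.

Lemma restr_local (C A : {set X}) : C \in classes e -> A \subset C -> restr_fun f e A = f A.
Proof.
move=> CQ sA; rewrite /restr_fun (bigD1 C CQ) /= (setIidPl sA) big1 ?addr0 //.
move=> C' /andP [C'Q neq].
have dis := trivIsetP (partition_trivIset classes_partition) _ _ C'Q CQ neq.
suff -> : A :&: C' = set0 by [].
apply/setP=> x; rewrite !inE; case xA: (x \in A) => //=.
exact: disjointFl dis (subsetP sA x xA).
Qed.

Lemma restr0 : restr_fun f e set0 = 0.
Proof. by rewrite /restr_fun big1 // => C _; rewrite set0I f0. Qed.

Lemma restr_sum (A : {set X}) : restr_fun f e A = \sum_(C in classes e) restr_fun f e (A :&: C).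
Proof.
rewrite {1}/restr_fun; apply: eq_bigr => C CQ.
by rewrite (restr_local CQ) // subsetIr.
Qed.

Lemma indec_restr (C : {set X}) : C \in classes e ->
  indecomposable_on (restr_fun f e) C = indecomposable_on f C.
Proof. by move=> CQ; apply: indec_congr => A sA; exact: (restr_local CQ sA). Qed.

Lemma indec_EW : (forall C : {set X}, C \in classes e -> indecomposable_on f C) -> EW f e.
Proof.
move=> iC; split => //.
have hP : idecomp (restr_fun f e) setT (classes e).
  apply/idecompP; split.
  - exact: classes_partition.
  - by move=> A _; apply: restr_sum.
  - by move=> D DQ; rewrite indec_restr //; apply: iC.
by rewrite ic_eq (ic_onE restr0 hP).
Qed.

Lemma EW_indec : EW f e -> forall C : {set X}, C \in classes e -> indecomposable_on f C.
Proof.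
move=> [_ icE] C CQ.
set g := restr_fun f e.
have g0 : g set0 = 0 := restr0.
have [P hP] := idecomp_exists g0 setT.
have icg : ic g = #|P| by rewrite ic_eq (ic_onE g0 hP).
have := hP => /idecompP [pP hPs iP].
have pCl := classes_partition.
have tCl := partition_trivIset pCl.
have blk : forall Y, Y \in P -> exists2 C', C' \in classes e & Y \subset C'.
  by move=> Y YP; apply: (block_sub g0 pCl (fun A _ => restr_sum A) (iP Y YP) (subsetT Y)).
have nC := partition_neq0 pCl CQ.
have [c cC] := set0Pn _ nC.
pose pi (Y : {set X}) := pblock (classes e) (odflt c [pick y in Y]).
have piE : forall Y C' : {set X}, Y \in P -> C' \in classes e -> Y \subset C' -> pi Y = C'.
  move=> Y C' YP C'Q sY; rewrite /pi; case: pickP => [y yY|none] /=.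
    by apply: def_pblock => //; apply: (subsetP sY).
  by have := partition_neq0 pP YP; case/set0Pn => y; rewrite none.
have inC : forall x : X, x \in C -> pblock P x \subset C.
  move=> x xC.
  have xP : x \in cover P by rewrite (cover_partition pP) inE.
  have [C1 C1Q sC1] := blk _ (pblock_mem xP).
  have xC1 : x \in C1 by apply: (subsetP sC1); rewrite mem_pblock.
  have -> : C = C1 by rewrite -(def_pblock tCl CQ xC) (def_pblock tCl C1Q xC1).
  exact: sC1.
apply: contraT => niC.
have niCg : ~~ indecomposable_on g C by rewrite /g indec_restr.
have CnP : C \notin P by apply: contra niCg; apply: iP.
have cP : c \in cover P by rewrite (cover_partition pP) inE.
set Y1 := pblock P c.
have Y1P : Y1 \in P := pblock_mem cP.
have sY1 : Y1 \subset C := inC c cC.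
have nsC : ~~ (C \subset Y1).
  apply: contra CnP => sC; have -> : C = Y1 by apply/eqP; rewrite eqEsubset sC sY1.
  exact: Y1P.
have [c2 c2C c2nY1] := subsetPn nsC.
have c2P : c2 \in cover P by rewrite (cover_partition pP) inE.
set Y2 := pblock P c2.
have Y2P : Y2 \in P := pblock_mem c2P.
have sY2 : Y2 \subset C := inC c2 c2C.
have neq : Y1 != Y2 by apply: contraNneq c2nY1 => ->; rewrite mem_pblock.
have sub : classes e \subset pi @: P.
  apply/subsetP => C' C'Q.
  have [c' c'C'] := set0Pn _ (partition_neq0 pCl C'Q).
  have c'P : c' \in cover P by rewrite (cover_partition pP) inE.
  have YP := pblock_mem c'P.
  have [C1 C1Q sC1] := blk _ YP.
  have c'C1 : c' \in C1 by apply: (subsetP sC1); rewrite mem_pblock.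
  have e1 : C1 = C' by rewrite -(def_pblock tCl C1Q c'C1) (def_pblock tCl C'Q c'C').
  by apply/imsetP; exists (pblock P c'); rewrite // (piE _ C1) // e1.
have c1 := subset_leq_card sub.
have ninj : ~~ (#|pi @: P| == #|P|).
  apply/negP => /imset_injP inj.
  by move: neq; rewrite (inj _ _ Y1P Y2P) ?eqxx // (piE _ C) // (piE _ C).
have c2' := leq_imset_card pi P.
have : (#|classes e| < #|P|)%N.
  have : (#|pi @: P| < #|P|)%N by rewrite ltn_neqAle ninj c2'.
  exact: leq_ltn_trans c1.
by rewrite -icg icE /cl ltnn.
Qed.

End EWsec.

Section Transport.
Variables (X Z : finType) (phi : X -> Z) (h : boolfun Z) (f : boolfun X).
Hypothesis phi_inj : injective phi.
Hypothesis fE : forall B, f B = h (phi @: B).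

Lemma preim_sub (A' Y : {set Z}) (Y0 : {set X}) : Y = phi @: Y0 -> A' \subset Y -> phi @^-1: A' \subset Y0.
Proof.
move=> -> sA; apply/subsetP => x; rewrite inE => xA.
by rewrite -(imset_mem_inj phi_inj); apply: (subsetP sA).
Qed.

Lemma sub_range (A' : {set Z}) (Y0 : {set X}) : A' \subset phi @: Y0 -> A' \subset phi @: setT.
Proof. by move=> sA; apply: (subset_trans sA); apply: imsetS; apply: subsetT. Qed.

Lemma splits_transport (Y W : {set X}) :
  splits f Y W <-> splits h (phi @: Y) (phi @: W).
Proof.
split => spl A sA.
  have sA0 := preim_sub (erefl _) sA.
  rewrite -(imset_preim (sub_range sA)) -fE spl //.
  by rewrite !fE !(imsetI_inj phi_inj) (imsetD_inj phi_inj).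
rewrite !fE spl ?imsetS //.
by rewrite !(imsetI_inj phi_inj) (imsetD_inj phi_inj).
Qed.

Lemma indec_transport (Y : {set X}) :
  indecomposable_on f Y = indecomposable_on h (phi @: Y).
Proof.
apply/indecP/indecP => [[nY H]|[nY H]]; split.
- by rewrite imset_eq0.
- move=> W' sW spl.
  have sW0 := preim_sub (erefl _) sW.
  have eW : phi @: (phi @^-1: W') = W' := imset_preim (sub_range sW).
  rewrite -eW in spl *.
  case: (H _ sW0 _) => [|->|->]; [by apply/splits_transport| left; exact: imset0 | by right].
- by rewrite -(imset_eq0 phi).
- move=> W sW spl.
  case: (H (phi @: W) (imsetS _ sW) _) => [|E|E].
  + by apply/splits_transport.
  + by left; apply/eqP; rewrite -(imset_eq0 phi) E.
  + by right; apply: (imset_inj phi_inj).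
Qed.

Hypothesis h0 : h set0 = 0.

Lemma ic_transport : ic_on f setT = ic_on h (phi @: setT).
Proof.
have f0 : f set0 = 0 by rewrite fE imset0.
have [P hP] := idecomp_exists f0 setT.
have := hP => /idecompP [pP hPs iP].
pose PP := [set phi @: (Y : {set X}) | Y in P].
have hPP : idecomp h (phi @: setT) PP.
  apply/idecompP; split.
  - by rewrite imset_partition.
  - move=> A sA.
    rewrite -(imset_preim sA) -fE hPs ?subsetT // big_imset /=.
      by apply: eq_bigr => Y _; rewrite fE (imsetI_inj phi_inj).
    by move=> Y1 Y2 _ _; apply: imset_inj.
  - by move=> _ /imsetP [Y YP ->]; rewrite -indec_transport iP.
rewrite (ic_onE f0 hP) (ic_onE h0 hPP) card_imset //.
exact: imset_inj.
Qed.

End Transport.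

Definition W (Bt : subspecies) (Z : finType) (h : boolfun Z) (U : {set Z}) : Prop :=
  exists (X : finType) (f : boolfun X) (phi : X -> Z),
    [/\ Bt X f, injective phi, phi @: setT = U & forall B, f B = h (phi @: B)].

Definition bprod (X Y : finType) (f : boolfun X) (g : boolfun Y) : boolfun (X + Y)%type :=
  fun A => f (inl @^-1: A) + g (inr @^-1: A).

Section WLemmas.
Variable Bt : subspecies.
Hypothesis cBt : convenient Bt.

Lemma W_void (U : {set void}) : W Bt (fun _ => 0) U.
Proof.
case: cBt => _ _ hv _ _.
exists void, (fun _ => 0), id; split => //.
by apply/setP => -[].
Qed.

Lemma W_bij (Z Z' : finType) (s : Z -> Z') (h : boolfun Z) U : bijective s ->
  W Bt h U -> W Bt (fun B => h (s @^-1: B)) (s @: U).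
Proof.
move=> sb [X [f [phi [hf phinj phiU fE]]]].
exists X, f, (s \o phi); split => //.
- exact: inj_comp (bij_inj sb) phinj.
- by rewrite imset_comp phiU.
- by move=> B; rewrite imset_comp preim_imset // ?fE //; apply: bij_inj.
Qed.

Definition summap (X1 X2 Z1 Z2 : Type) (p1 : X1 -> Z1) (p2 : X2 -> Z2) (s : X1 + X2) : Z1 + Z2 :=
  match s with inl x => inl (p1 x) | inr y => inr (p2 y) end.

Lemma preim_inl_map (X1 X2 Z1 Z2 : finType) (p1 : X1 -> Z1) (p2 : X2 -> Z2) (B : {set X1 + X2}) :
  inl @^-1: (summap p1 p2 @: B) = p1 @: (inl @^-1: B) :> {set Z1}.
Proof.
apply/setP => z; rewrite inE; apply/imsetP/imsetP => [[[x|y] xB //= [->]]|[x xB ->]].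
  by exists x; rewrite ?inE.
by exists (inl x) => //; move: xB; rewrite inE.
Qed.

Lemma preim_inr_map (X1 X2 Z1 Z2 : finType) (p1 : X1 -> Z1) (p2 : X2 -> Z2) (B : {set X1 + X2}) :
  inr @^-1: (summap p1 p2 @: B) = p2 @: (inr @^-1: B) :> {set Z2}.
Proof.
apply/setP => z; rewrite inE; apply/imsetP/imsetP => [[[x|y] xB //= [->]]|[x xB ->]].
  by exists y; rewrite ?inE.
by exists (inr x) => //; move: xB; rewrite inE.
Qed.

Lemma W_prod (Z1 Z2 : finType) (h1 : boolfun Z1) (h2 : boolfun Z2) U1 U2 :
  h1 set0 = 0 -> h2 set0 = 0 ->
  W Bt h1 U1 -> W Bt h2 U2 -> W Bt (bprod h1 h2) (inl @: U1 :|: inr @: U2).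
Proof.
move=> h10 h20 [X1 [f1 [p1 [hf1 inj1 pU1 fE1]]]] [X2 [f2 [p2 [hf2 inj2 pU2 fE2]]]].
case: cBt => _ _ _ hprod _.
exists (X1 + X2)%type, (bprod f1 f2), (summap p1 p2); split.
- exact: hprod.
- move=> [x|y] [x'|y'] //= [E]; [by rewrite (inj1 _ _ E) | by rewrite (inj2 _ _ E)].
- apply/setP => -[z|z]; rewrite inE; apply/imsetP/orP.
  + move=> [[x|y] _ //= [->]]; left; rewrite -pU1; apply: imset_f; exact: imset_f.
  + move=> [/imsetP [z' zU ->]|/imsetP [z' zU //]].
    by move: zU; rewrite -pU1 => /imsetP [x _ ->]; exists (inl x).
  + move=> [[x|y] _ //= [->]]; right; rewrite -pU2; apply: imset_f; exact: imset_f.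
  + move=> [/imsetP [z' zU //]|/imsetP [z' zU ->]].
    by move: zU; rewrite -pU2 => /imsetP [x _ ->]; exists (inr x).
- by move=> B; rewrite /bprod preim_inl_map preim_inr_map fE1 fE2.
Qed.

Lemma W_res (Z : finType) (h : boolfun Z) U (Y : {set Z}) :
  W Bt h U -> W Bt (fun B : {set {y : Z | y \in Y}} => h (val @: B)) (val @^-1: U).
Proof.
move=> [X [f [phi [hf phinj phiU fE]]]].
case: cBt => _ _ _ _ [hres _ _].
have memY : forall x : {x : X | x \in phi @^-1: Y}, phi (val x) \in Y.
  by move=> x; have := valP x; rewrite inE.
pose phi' (x : {x : X | x \in phi @^-1: Y}) : {y : Z | y \in Y} := exist _ (phi (val x)) (memY x).
exists {x : X | x \in phi @^-1: Y}, (fun B : {set {x : X | x \in phi @^-1: Y}} => f (val @: B)), phi'; split.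
- exact: hres.
- by move=> x1 x2 /(congr1 val) /= /phinj /val_inj.
- apply/setP => y; rewrite inE -phiU; apply/imsetP/imsetP => [[x _ ->]|[x _ ex]].
    by exists (val x).
  have xY : x \in phi @^-1: Y by rewrite inE -ex (valP y).
  by exists (exist _ x xY) => //; apply: val_inj.
- move=> B; rewrite fE -!imset_comp; congr (h _); exact: eq_imset.
Qed.

End WLemmas.

Lemma classesP (X : finType) (e : rel X) (C : {set X}) :
  reflect (exists x, C = [set y | e x y]) (C \in classes e).
Proof.
apply: (iffP imsetP) => [[x _ ->]|[x ->]]; exists x => //.
  by apply/setP => y; rewrite !inE.
by apply/setP => y; rewrite !inE.
Qed.

Lemma class_mem (X : finType) (e : rel X) x : [set y | e x y] \in classes e.
Proof. by apply/classesP; exists x. Qed.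

Lemma quot_fun0 (X : finType) (h : boolfun X) (e : rel X) : h set0 = 0 -> quot_fun h e set0 = 0.
Proof. by move=> h0; rewrite /quot_fun big_set0. Qed.

Section WQuot.
Variable Bt : subspecies.
Hypothesis cBt : convenient Bt.

Lemma W_quot (Z : finType) (h : boolfun Z) (e : rel Z) (U : {set Z}) :
  h set0 = 0 -> EW h e ->
  (forall C : {set Z}, C \in classes e -> C \subset U \/ C \subset ~: U) ->
  W Bt h U ->
  W Bt (quot_fun h e) [set C : quot e | val C \subset U] /\
  ic_on (quot_fun h e) [set C : quot e | val C \subset U] = ic_on h U.
Proof.
move=> h0 ew side [X [f [phi [hf phinj phiU fE]]]].
case: cBt => _ _ _ _ [_ hquot hES].
have eqe := ew.1.
pose e1 : rel X := fun x y => e (phi x) (phi y).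
have eqe1 : equivalence_rel e1 by move=> x y z; apply: eqe.
have f0 : f set0 = 0 by rewrite fE imset0.
have erefl' : forall z, e z z by move=> z; have [] := eqe z z z.
have Kin : forall z, z \in U -> [set y | e z y] \subset U.
  move=> z zU; case: (side _ (class_mem e z)) => // sC.
  by have := subsetP sC z; rewrite !inE erefl' zU => /(_ isT).
have imD : forall x, phi @: [set y | e1 x y] = [set z | e (phi x) z].
  move=> x; apply/setP => z; apply/imsetP/idP => [[y]|].
    by rewrite !inE => exy ->.
  move=> ez; have zU : z \in U by apply: (subsetP (Kin (phi x) _)); rewrite // -phiU imset_f.
  move: zU; rewrite -phiU => /imsetP [y _ zy].
  by exists y; [rewrite inE /e1 -zy; move: ez; rewrite inE | exact: zy].
have memK : forall D : quot e1, phi @: val D \in classes e.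
  move=> D; have /classesP [x ->] := valP D.
  by rewrite imD class_mem.
pose phi' (D : quot e1) : quot e := exist _ (phi @: val D) (memK D).
have phi'inj : injective phi'.
  move=> D1 D2 /(congr1 val) /= /(imset_inj phinj) /val_inj //.
have ewf : EW f e1.
  apply: indec_EW => // D DQ.
  rewrite (indec_transport phinj fE).
  apply: (EW_indec h0 eqe ew).
  have /classesP [x ->] := DQ.
  by rewrite imD class_mem.
have hq : Bt (quot_fun f e1) := hquot _ _ _ hf ewf.
have phi'U : phi' @: setT = [set C : quot e | val C \subset U].
  apply/setP => C; rewrite inE; apply/imsetP/idP => [[D _ ->]|sC].
    by rewrite /= -phiU imsetS // subsetT.
  have /classesP [z Cz] := valP C.
  have zU : z \in U by apply: (subsetP sC); rewrite Cz inE erefl'.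
  move: zU; rewrite -phiU => /imsetP [x _ zx].
  have Dm : [set y | e1 x y] \in classes e1 := class_mem e1 x.
  exists (exist (fun D : {set X} => D \in classes e1) _ Dm) => //; apply: val_inj => /=.
  by rewrite imD Cz zx.
have fE' : forall B, quot_fun f e1 B = quot_fun h e (phi' @: B).
  move=> B; rewrite /quot_fun fE; congr (h _).
  apply/setP => z; apply/imsetP/bigcupP => [[x /bigcupP [D DB xD] ->]|[C /imsetP [D DB ->] zC]].
    by exists (phi' D); [apply: imset_f | apply: imset_f].
  move: zC => /imsetP [x xD ->]; exists x => //.
  by apply/bigcupP; exists D.
split; first by exists (quot e1), (quot_fun f e1), phi'; split.
rewrite -phi'U -(ic_transport phi'inj fE' (quot_fun0 e h0)) -ic_eq.
have [_ ->] := (hES _ _ _ hf).1 ewf.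
by rewrite ic_eq (ic_transport phinj fE h0) phiU.
Qed.

End WQuot.

Definition spl (Z : finType) (h : boolfun Z) (U : {set Z}) :=
  forall A, h A = h (A :&: U) + h (A :&: ~: U).

Section SumSets.
Variables (X Y : finType).
Implicit Types (U : {set X}) (V : {set Y}).

Lemma inl_injT : injective (@inl X Y). Proof. by move=> a b []. Qed.
Lemma inr_injT : injective (@inr X Y). Proof. by move=> a b []. Qed.

Lemma mem_ll U x : (inl x \in (@inl X Y) @: U) = (x \in U).
Proof. by apply/imsetP/idP => [[x' x'U [->]]|xU]; [| exists x]. Qed.
Lemma mem_rr V y : (inr y \in (@inr X Y) @: V) = (y \in V).
Proof. by apply/imsetP/idP => [[x' x'U [->]]|xU]; [| exists y]. Qed.
Lemma mem_lr V x : (inl x \in (@inr X Y) @: V) = false.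
Proof. by apply/imsetP => -[]. Qed.
Lemma mem_rl U y : (inr y \in (@inl X Y) @: U) = false.
Proof. by apply/imsetP => -[]. Qed.

Lemma compl_sum U V : ~: (inl @: U :|: inr @: V) = inl @: (~: U) :|: inr @: (~: V).
Proof. by apply/setP => -[x|y]; rewrite !inE ?mem_ll ?mem_lr ?mem_rr ?mem_rl !inE /= ?orbF. Qed.

Lemma preim_l_sum (A : {set X + Y}) U V : inl @^-1: (A :&: (inl @: U :|: inr @: V)) = inl @^-1: A :&: U.
Proof. by apply/setP => x; rewrite !inE mem_ll mem_lr orbF. Qed.
Lemma preim_r_sum (A : {set X + Y}) U V : inr @^-1: (A :&: (inl @: U :|: inr @: V)) = inr @^-1: A :&: V.
Proof. by apply/setP => x; rewrite !inE mem_rr mem_rl. Qed.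

Lemma spl_prod (h1 : boolfun X) (h2 : boolfun Y) U V :
  spl h1 U -> spl h2 V -> spl (bprod h1 h2) (inl @: U :|: inr @: V).
Proof.
move=> s1 s2 A; rewrite /bprod compl_sum !preim_l_sum !preim_r_sum.
by rewrite {1}s1 {1}s2 addrACA.
Qed.

Lemma W_inl Bt (f : boolfun X) (g : boolfun Y) : Bt X f -> g set0 = 0 ->
  W Bt (bprod f g) (inl @: setT :|: inr @: set0).
Proof.
move=> hf g0; exists X, f, inl; split => //.
- exact: inl_injT.
- by rewrite imset0 setU0.
- move=> B; rewrite /bprod preim_imset; last exact: inl_injT.
  have -> : inr @^-1: (inl @: B) = set0 :> {set Y} by apply/setP => y; rewrite !inE mem_rl.
  by rewrite g0 addr0.
Qed.

Lemma W_inr Bt (f : boolfun X) (g : boolfun Y) : Bt Y g -> f set0 = 0 ->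
  W Bt (bprod f g) (~: (inl @: setT :|: inr @: set0)).
Proof.
move=> hg f0; exists Y, g, inr; split => //.
- exact: inr_injT.
- by apply/setP => -[x|y]; rewrite !inE ?mem_ll ?mem_lr ?mem_rr ?mem_rl !inE ?imset_f.
- move=> B; rewrite /bprod preim_imset; last exact: inr_injT.
  have -> : inl @^-1: (inr @: B) = set0 :> {set X} by apply/setP => x; rewrite !inE mem_lr.
  by rewrite f0 add0r.
Qed.

End SumSets.

Lemma quot_facts (Z : finType) (h : boolfun Z) (e : rel Z) (U : {set Z}) :
  spl h U -> EW h e ->
  [/\ forall C : {set Z}, C \in classes e -> C \subset U \/ C \subset ~: U,
      spl (quot_fun h e) [set C : quot e | val C \subset U] &
      ~: [set C : quot e | val C \subset U] = [set C : quot e | val C \subset ~: U]].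
Proof.
move=> sp ew; have h0 := spl0 sp; have eqe := ew.1.
have side : forall C : {set Z}, C \in classes e -> C \subset U \/ C \subset ~: U.
  move=> C CQ; have /indecP [_ H] := EW_indec h0 eqe ew CQ.
  have sps : splits h C (C :&: U).
    move=> A sA; rewrite addrC {1}sp; congr (h _ + h _).
      by rewrite setIA (setIidPl sA).
    apply/setP => x; rewrite !inE; case xA: (x \in A); rewrite ?andbF //=.
    by rewrite (subsetP sA x xA) /= andbT.
  case: (H _ (subsetIl _ _) sps) => E; [right|left].
    apply/subsetP => x xC; rewrite inE; apply/negP => xU.
    by move: E => /setP /(_ x); rewrite !inE xC xU.
  by rewrite -E subsetIr.
have ne : forall C : quot e, val C != set0.
  by move=> C; apply: (partition_neq0 (classes_partition eqe)); apply: valP.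
have exc : forall C : quot e, (val C \subset ~: U) = ~~ (val C \subset U).
  move=> C; have [x xC] := set0Pn _ (ne C).
  case: (side _ (valP C)) => s.
    rewrite s /=; apply/negbTE/negP => s'.
    by have := subsetP s x xC; have := subsetP s' x xC; rewrite inE => /negP.
  rewrite s; apply/esym/negP => s'.
  by have := subsetP s x xC; have := subsetP s' x xC; rewrite inE => ->.
split => //.
- move=> A; rewrite /quot_fun {1}sp; congr (h _ + h _).
    apply/setP => z; rewrite inE; apply/andP/bigcupP => [[/bigcupP [C CA zC] zU]|[C] /[!inE] /andP [CA sC] zC].
      exists C => //; rewrite !inE CA /=.
      case: (side _ (valP C)) => // s.
      by have := subsetP s z zC; rewrite inE zU.
    by split; [apply/bigcupP; exists C | apply: (subsetP sC)].
  apply/setP => z; rewrite inE; apply/andP/bigcupP => [[/bigcupP [C CA zC] zU]|[C] /[!inE] /andP [CA sC] zC].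
    exists C => //; rewrite !inE CA /= -exc.
    case: (side _ (valP C)) => // s.
    by have := subsetP s z zC; move: zU; rewrite inE => /negP.
  split; first by apply/bigcupP; exists C.
  rewrite -exc in sC; by have := subsetP sC z zC; rewrite inE.
- by apply/setP => C; rewrite !inE exc.
Qed.

Definition Bt3 (Bt1 Bt2 : subspecies) : subspecies :=
  fun Z h => exists U, [/\ spl h U, W Bt1 h U & W Bt2 h (~: U)].

Lemma Bt3_conv Bt1 Bt2 : convenient Bt1 -> convenient Bt2 -> convenient (Bt3 Bt1 Bt2).
Proof.
move=> c1 c2; split.
- by move=> Z h [U [s _ _]]; exact: spl0 s.
- move=> Z Z' s sb h [U [sp w1 w2]].
  have sinj := bij_inj sb.
  exists (s @: U); split.
  + move=> A /=; rewrite !preimsetI preimsetC !preim_imset //; exact: sp.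
  + exact: W_bij.
  + have -> : ~: (s @: U) = s @: (~: U).
      apply/setP => z; have [g sg gs] := sb.
      by rewrite -(gs z) inE !imset_mem_inj // inE.
    exact: W_bij.
- exists set0; split; [by move=> A; rewrite addr0 | exact: W_void | exact: W_void].
- move=> X Y f g [U1 [sp1 w11 w12]] [U2 [sp2 w21 w22]].
  have f0 := spl0 sp1; have g0 := spl0 sp2.
  exists (inl @: U1 :|: inr @: U2); split.
  + exact: spl_prod.
  + exact: W_prod.
  + by rewrite compl_sum; apply: W_prod.
- split.
  + move=> X f Y [U [sp w1 w2]].
    exists (val @^-1: U); split.
    * move=> A; rewrite -preimsetC !imsetI_preim; exact: sp.
    * exact: W_res.
    * rewrite -preimsetC; exact: W_res.
  + move=> X f e [U [sp w1 w2]] ew.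
    have h0 := spl0 sp.
    have [side sq ce] := quot_facts sp ew.
    exists [set C : quot e | val C \subset U]; split => //.
    * by have [] := W_quot c1 h0 ew side w1.
    * rewrite ce.
      have side' : forall C : {set X}, C \in classes e -> C \subset ~: U \/ C \subset ~: ~: U.
        by move=> C CQ; rewrite setCK; case: (side C CQ); [right|left].
      by have [] := W_quot c2 h0 ew side' w2.
  + move=> X f e [U [sp w1 w2]]; split; last by case.
    move=> ew; split => //.
    have h0 := spl0 sp.
    have [side sq ce] := quot_facts sp ew.
    have side' : forall C : {set X}, C \in classes e -> C \subset ~: U \/ C \subset ~: ~: U.
      by move=> C CQ; rewrite setCK; case: (side C CQ); [right|left].
    have [_ i1] := W_quot c1 h0 ew side w1.
    have [_ i2] := W_quot c2 h0 ew side' w2.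
    by rewrite !ic_eq (ic_on_split sq) (ic_on_split sp) ce i1 i2.
Qed.

Lemma empty_elim (X : finType) : #|X| = 0%N -> X -> False.
Proof. by move=> H x; have := card0_eq H x; rewrite !inE. Qed.

Lemma ic_empty (X : finType) (f : boolfun X) : #|X| = 0%N -> ic f = 0%N.
Proof.
move=> H; rewrite /ic; case: pickP => // P /and3P [pP _ _].
have eT : [set: X] = set0 by apply/setP => x; case: (empty_elim H x).
by move: pP; rewrite eT partition_set0 => /eqP ->; rewrite cards0.
Qed.


Definition Bt0 : subspecies := fun X f => #|X| = 0%N /\ f set0 = 0.

Lemma Bt0_conv : convenient Bt0.
Proof.
have qe : forall (X : finType) (e : rel X), #|X| = 0%N -> #|quot e| = 0%N.
  move=> X e H; apply: eq_card0 => C; exfalso.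
  have /classesP [x _] := valP C.
  exact: empty_elim H x.
split.
- by move=> X f [].
- move=> X Y s sb f [H f0]; split; first by rewrite -(bij_eq_card sb).
  by rewrite preimset0.
- by split; [exact: card_void|].
- move=> X Y f g [H1 f0] [H2 g0]; split; first by rewrite card_sum H1 H2.
  by rewrite !preimset0 f0 g0 addr0.
- split.
  + move=> X f Y [H f0]; split; last by rewrite imset0.
    by apply: eq_card0 => y; exfalso; exact: empty_elim H (val y).
  + move=> X f e [H f0] _; split; [exact: qe | exact: quot_fun0].
  + move=> X f e [H f0]; split; last by case.
    by move=> ew; split => //; rewrite !ic_empty // qe.
Qed.

Theorem proposition3p24 :
  exists Bmax : subspecies,
    convenient Bmax /\
    forall Bt : subspecies, convenient Bt ->
      forall (X : finType) (f : boolfun X), Bt X f -> Bmax X f.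
Proof.
exists (fun X f => exists Bt : subspecies, convenient Bt /\ Bt X f); split; last first.
  by move=> Bt cBt X f hf; exists Bt.
split.
- by move=> X f [Bt [[h _ _ _ _] hf]]; exact: h.
- by move=> X Y s sb f [Bt [cBt hf]]; exists Bt; split => //; case: cBt => _ h _ _ _; exact: h.
- by exists Bt0; split; [exact: Bt0_conv | split; [exact: card_void|]].
- move=> X Y f g [B1 [c1 hf]] [B2 [c2 hg]].
  exists (Bt3 B1 B2); split; first exact: Bt3_conv.
  have f0 : f set0 = 0 by case: c1 => h _ _ _ _; exact: h.
  have g0 : g set0 = 0 by case: c2 => h _ _ _ _; exact: h.
  exists (inl @: setT :|: inr @: set0); split.
  + apply: spl_prod => A; first by rewrite setIT setCT setI0 f0 addr0.
    by rewrite setI0 setC0 setIT g0 add0r.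
  + exact: W_inl.
  + exact: W_inr.
- split.
  + by move=> X f Y [Bt [cBt hf]]; exists Bt; split => //; case: cBt => _ _ _ _ [h _ _]; exact: h.
  + by move=> X f e [Bt [cBt hf]] ew; exists Bt; split => //; case: cBt => _ _ _ _ [_ h _]; exact: h.
  + by move=> X f e [Bt [cBt hf]]; case: cBt => _ _ _ _ [_ _ h]; exact: h.
Qed.
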